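(* Let $A$ be a $3\times 3$ skew-symmetric integer matrix which is mutation-cyclic, and let $g\in\mathbb{Z}^3$ be a nonzero vector with $Ag=0$. Write the output of the algorithm described in the context as $m(A)=S(-a,-b,c)$ and suppose $c>2$. Then the graded cluster algebra $\mathcal{A}((x_1,x_2,x_3),A,g)$ has only finitely many cluster variables of each occurring degree. Moreover, the grading is not balanced.
   Context: Notation: for integers $p,q,r$, $S(p,q,r)$ denotes the skew-symmetric matrix $\begin{pmatrix}0&-p&-r\\ p&0&-q\\ r&q&0\end{pmatrix}$. Matrix mutation: for a $3\times3$ skew-symmetric integer matrix $B=(b_{ij})$ and $k\in\{1,2,3\}$, $\mu_k(B)=(b'_{ij})$ with $b'_{ij}=-b_{ij}$ if $i=k$ or $j=k$, and $b'_{ij}=b_{ij}+\operatorname{sgn}(b_{ik})\max(b_{ik}b_{kj},0)$ otherwise. The mutation class of $B$ is the set of matrices obtained from $B$ by finite sequences of mutations. A $3\times 3$ skew-symmetric matrix is acyclic if its associated quiver (with $b_{ij}$ arrows $i\to j$ when $b_{ij}>0$) has no oriented cycle, equivalently if some column has all its nonzero entries of the same sign; otherwise it is cyclic. $A$ is mutation-cyclic if every matrix in its mutation class is cyclic. Essential equivalence: $B$ and $C$ are essentially equivalent if there is a permutation $\sigma$ of $\{1,2,3\}$ with $C_{ij}=B_{\sigma(i)\sigma(j)}$ for all $i,j$, or $C_{ij}=-B_{\sigma(i)\sigma(j)}$ for all $i,j$ (overall sign is disregarded). The standard form of $B$ is the first matrix in the list $S(-a,-b,c),\,S(-a,b,c),\,S(a,-b,c),\,S(a,b,c)$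 (with $a\ge b\ge c\ge 0$) that is essentially equivalent to $B$. Algorithm defining $m(A)$: replace the input by its standard form and write it $S(-a,-b,c)$ with $|a|\ge|b|\ge|c|\ge 0$; set $A_1$ equal to it. Step 1: if $a\ge b\ge c\ge 2$ and $bc-a\ge b$, the input passes; otherwise, if some column is sign-coherent or $c\le 2$, it fails. Step 2 (for the current $A_i$): if some matrix essentially equivalent to $\mu_3(A_i)$ has the form $S(-d,-e,f)$ with $d\ge e\ge f\ge 2$, let $A_{i+1}$ be such a matrix; otherwise fail. Then: if $f\ge 3$ and $ef-d\ge e$, pass; if $f=2$, pass if $d=e$ and fail if $d>e$; otherwise increase $i$ and repeat Step 2. Output: if the input passed with the most recently computed matrix $S(-d,-e,f)$ (for the pass in Step 1 this is $S(-a,-b,c)$) satisfying $ef-d\ge d$, then $m(A)$ is that matrix; if it passed with $ef-d<d$, then $m(A)$ is $\mu_3$ of that matrix; if it failed, continue computing $A_i$ in the same way until an acyclic $A_k$ is reached and set $m(A)=A_k$. Graded cluster algebras: a seed $((x_1,x_2,x_3),B)$ mutates in direction $k$ to $(x',\mu_k B)$ with $x'_j=x_j$ ($j\ne k$) and $x'_k=\big(\prod_{b_{ik}>0}x_i^{b_{ik}}+\prod_{b_{ik}<0}x_i^{-b_{ik}}\big)/x_k$. Cluster variables are all entries of clusters reachable by iterated mutation, and $\mathcal{A}(x,B,g)$ is the algebra they generate, graded by $\deg x_i=g_i$ where $Bg=0$; under mutation at $k$ the degree vector becomes $g'$ with $g'_j=g_j$ ($j\neq k$) and $g'_k=-g_k+\sum_{b_{ik}>0}b_{ik}g_i$,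 and every cluster variable is homogeneous. A degree occurs if some cluster variable has that degree. The grading is balanced if for every $d$ there is a bijection between the cluster variables of degree $d$ and those of degree $-d$. *)

(* Defs.v *)
From HB Require Import structures.
From mathcomp Require Import all_boot all_order all_algebra all_fingroup.
From mathcomp Require Import fraction.
From mathcomp Require Import mpoly.
Set Implicit Arguments. Unset Strict Implicit. Unset Printing Implicit Defensive.
Import Order.TTheory GRing.Theory Num.Theory.
Local Open Scope ring_scope.

Notation mx3 := 'M[int]_3.

Definition skew_symmetric (B : mx3) : Prop := B^T = - B.

Definition S (p q r : int) : mx3 :=
  \matrix_(i < 3, j < 3)
    match nat_of_ord i, nat_of_ord j with
    | 1%N, 0%N => p | 0%N, 1%N => - p
    | 2%N, 0%N => r | 0%N, 2%N => - r
    | 2%N, 1%N => q | 1%N, 2%N => - q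
    | _, _ => 0
    end.

Definition mu (k : 'I_3) (B : mx3) : mx3 :=
  \matrix_(i < 3, j < 3)
    if (i == k) || (j == k) then - B i j
    else B i j + sgz (B i k) * Num.max (B i k * B k j) 0.

Definition mu_seq (s : seq 'I_3) (B : mx3) : mx3 :=
  foldl (fun C k => mu k C) B s.

(* the quiver of B has b_ij arrows i -> j when b_ij > 0; for a 3x3
   skew-symmetric matrix an oriented cycle is a 3-cycle *)
Definition cyclic (B : mx3) : Prop :=
  exists i j k : 'I_3, [/\ 0 < B i j, 0 < B j k & 0 < B k i].
Definition acyclic (B : mx3) : Prop := ~ cyclic B.

Definition mutation_cyclic (A : mx3) : Prop :=
  forall s : seq 'I_3, cyclic (mu_seq s A).

Definition ess_eq (B C : mx3) : Prop :=
  exists s : 'S_3,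
    (forall i j, C i j = B (s i) (s j)) \/ (forall i j, C i j = - B (s i) (s j)).

Definition sign_coherent_col (B : mx3) : Prop :=
  exists j : 'I_3, (forall i, 0 <= B i j) \/ (forall i, B i j <= 0).

Definition std_candidates (a b c : int) : seq mx3 :=
  [:: S (- a) (- b) c; S (- a) b c; S a (- b) c; S a b c].

Definition std_form (B T : mx3) : Prop :=
  exists a b c : int, [/\ a >= b, b >= c & c >= 0] /\
  exists2 n : nat, (n < 4)%N &
    [/\ T = nth 0 (std_candidates a b c) n, ess_eq B T &
        forall m : nat, (m < n)%N -> ~ ess_eq B (nth 0 (std_candidates a b c) m)].

Definition k3 : 'I_3 := @Ordinal 3 2 isT.

Definition pass_output (d e f : int) : mx3 :=
  if d <= e * f - d then S (- d) (- e) f else mu k3 (S (- d) (- e) f).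

Definition good_form (d e f : int) : Prop := [/\ d >= e, e >= f & f >= 2].

(* failing: continue computing A_i (any matrix essentially equivalent
   to mu_3 of the previous one) until an acyclic one is reached *)
Inductive fail_out : mx3 -> mx3 -> Prop :=
  | fo_stop X : acyclic X -> fail_out X X
  | fo_next X Y M : cyclic X -> ess_eq (mu k3 X) Y -> fail_out Y M -> fail_out X M.

(* Step 2, applied to the current A_i; second argument = output m(A) *)
Inductive step2_out : mx3 -> mx3 -> Prop :=
  | s2_pass Ai d e f :
      ess_eq (mu k3 Ai) (S (- d) (- e) f) -> good_form d e f ->
      ((3 <= f /\ e <= e * f - d) \/ (f = 2 /\ d = e)) ->
      step2_out Ai (pass_output d e f)
  | s2_repeat Ai d e f M :
      ess_eq (mu k3 Ai) (S (- d) (- e) f) -> good_form d e f ->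
      3 <= f -> e * f - d < e ->
      step2_out (S (- d) (- e) f) M -> step2_out Ai M
  | s2_fail_f2 Ai d e f M :
      ess_eq (mu k3 Ai) (S (- d) (- e) f) -> good_form d e f ->
      f = 2 -> e < d ->
      fail_out (S (- d) (- e) f) M -> step2_out Ai M
  | s2_fail_noform Ai M :
      ~ (exists d e f, ess_eq (mu k3 Ai) (S (- d) (- e) f) /\ good_form d e f) ->
      fail_out Ai M -> step2_out Ai M.

(* m_out A M : the algorithm on input A terminates with m(A) = M *)
Definition m_out (A M : mx3) : Prop :=
  exists T, std_form A T /\
  exists a b c : int, T = S (- a) (- b) c /\
    let pass1 := good_form a b c /\ b <= b * c - a in
    let fail1 := sign_coherent_col T \/ c <= 2 in
    [\/ pass1 /\ M = pass_output a b c,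
        ~ pass1 /\ fail1 /\ fail_out T M
      | ~ pass1 /\ ~ fail1 /\ step2_out T M].

Definition Frac := {fraction {mpoly rat[3]}}.

Definition xinit (i : 'I_3) : Frac := @FracField.tofrac _ ('X_i : {mpoly rat[3]}).

Record gseed := GSeed { sx : 'I_3 -> Frac; sB : mx3; sg : 'I_3 -> int }.

Definition mut_seed (k : 'I_3) (t : gseed) : gseed :=
  let x := sx t in let B := sB t in let g := sg t in
  GSeed
    (fun j => if j == k then
        (\prod_(i < 3 | 0 < B i k) x i ^+ absz (B i k)
         + \prod_(i < 3 | B i k < 0) x i ^+ absz (B i k)) / x k
      else x j)
    (mu k B)
    (fun j => if j == k then - g k + \sum_(i < 3 | 0 < B i k) B i k * g i
      else g j).

Definition seed_at (A : mx3) (g : 'cV[int]_3) (s : seq 'I_3) : gseed :=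
  foldl (fun t k => mut_seed k t) (GSeed xinit A (fun i => g i 0)) s.

Definition clvar_deg (A : mx3) (g : 'cV[int]_3) (d : int) (f : Frac) : Prop :=
  exists (s : seq 'I_3) (i : 'I_3),
    sx (seed_at A g s) i = f /\ sg (seed_at A g s) i = d.

Definition finitely_many_per_degree (A : mx3) (g : 'cV[int]_3) : Prop :=
  forall d : int, (exists f, clvar_deg A g d f) ->
    exists l : seq Frac, forall f, clvar_deg A g d f -> f \in l.

Definition balanced (A : mx3) (g : 'cV[int]_3) : Prop :=
  forall d : int, exists h : {f : Frac | clvar_deg A g d f} ->
                              {f : Frac | clvar_deg A g (- d) f}, bijective h.

(* Main.v *)
Require Import Defs.
From HB Require Import structures.
From mathcomp Require Import all_boot all_order all_algebra.
From mathcomp Require Import all_fingroup.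
From mathcomp Require Import zify ring lra.
From mathcomp Require Import fraction mpoly.
From Stdlib Require Import FunctionalExtensionality.
Import Order.TTheory GRing.Theory Num.Theory.
Local Open Scope ring_scope.
Set Implicit Arguments. Unset Strict Implicit. Unset Printing Implicit Defensive.

Definition o0 : 'I_3 := @Ordinal 3 0 isT.
Definition o1 : 'I_3 := @Ordinal 3 1 isT.
Definition o2 : 'I_3 := @Ordinal 3 2 isT.

Lemma ord3 (i : 'I_3) : i = o0 \/ i = o1 \/ i = o2.
Proof.
case: i => [[|[|[|m]]] H]; [left|right;left|right;right|done]; exact: val_inj.
Qed.

Ltac o3 i := case: (ord3 i) => ->.
Ltac o3a i := case: (ord3 i) => [->|[->|->]].

Lemma skewS B : skew_symmetric B -> B = S (B o1 o0) (B o2 o1) (B o2 o0).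
Proof.
rewrite /skew_symmetric => H.
have E : forall i j, B j i = - B i j.
  by move=> i j; have := congr1 (fun M : mx3 => M i j) H; rewrite !mxE.
apply/matrixP => i j; rewrite mxE.
o3a i; o3a j => /=; rewrite ?(E o0 o1) ?(E o1 o2) ?(E o0 o2) ?opprK //;
 have := E o0 o0; have := E o1 o1; have := E o2 o2; lia.
Qed.

Lemma skew_S p q r : skew_symmetric (S p q r).
Proof. apply/matrixP => i j; rewrite !mxE; o3a i; o3a j => /=; lia. Qed.

Lemma mu0S p q r : mu o0 (S p q r) = S (- p) (q + sgz r * Num.max (r * - p) 0) (- r).
Proof.
apply/matrixP => i j; rewrite !mxE; o3a i; o3a j; rewrite /= ?mxE /=; try lia.
all: case: (ltrgt0P p) => Hp; case: (ltrgt0P r) => Hr; nia.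
Qed.

Lemma mu1S p q r : mu o1 (S p q r) = S (- p) (- q) (r + sgz q * Num.max (q * p) 0).
Proof.
apply/matrixP => i j; rewrite !mxE; o3a i; o3a j; rewrite /= ?mxE /=; try lia.
all: case: (ltrgt0P p) => Hp; case: (ltrgt0P q) => Hr; nia.
Qed.

Lemma mu2S p q r : mu o2 (S p q r) = S (p + sgz (- q) * Num.max (- q * r) 0) (- q) (- r).
Proof.
apply/matrixP => i j; rewrite !mxE; o3a i; o3a j; rewrite /= ?mxE /=; try lia.
all: case: (ltrgt0P q) => Hp; case: (ltrgt0P r) => Hr; nia.
Qed.

Lemma cycS p q r : cyclic (S p q r) <-> (p < 0 /\ q < 0 /\ 0 < r) \/ (0 < p /\ 0 < q /\ r < 0).
Proof.
split.
  case=> i [j [k [H1 H2 H3]]]; move: H1 H2 H3.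
  o3a i; o3a j; o3a k; rewrite !mxE /=; lia.
case=> [[H1 [H2 H3]]|[H1 [H2 H3]]].
  exists o0, o1, o2; rewrite !mxE /=; split; lia.
exists o0, o2, o1; rewrite !mxE /=; split; lia.
Qed.

Definition tri := (int * int * int)%type.
Definition wtr (B : mx3) : tri := (`|B o1 o2|, `|B o0 o2|, `|B o0 o1|).
Definition get (w : tri) (k : 'I_3) : int :=
  match nat_of_ord k with 0%N => w.1.1 | 1%N => w.1.2 | _ => w.2 end.
Definition vieta (k : 'I_3) (w : tri) : tri :=
  match nat_of_ord k with
  | 0%N => (w.1.2 * w.2 - w.1.1, w.1.2, w.2)
  | 1%N => (w.1.1, w.1.1 * w.2 - w.1.2, w.2)
  | _ => (w.1.1, w.1.2, w.1.1 * w.1.2 - w.2) end.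
Definition Cm (w : tri) : int := w.1.1 * w.1.1 + w.1.2 * w.1.2 + w.2 * w.2 - w.1.1 * w.1.2 * w.2.

Lemma wtrS p q r : wtr (S p q r) = (`|q|, `|r|, `|p|).
Proof. by rewrite /wtr !mxE /= !normrN. Qed.

Lemma wtr_mu k p q r : cyclic (S p q r) -> cyclic (mu k (S p q r)) ->
  wtr (mu k (S p q r)) = vieta k (wtr (S p q r)).
Proof.
o3a k; rewrite ?mu0S ?mu1S ?mu2S !cycS !wtrS /vieta /=;
 move=> H1 H2; congr (_, _, _); nia.
Qed.

Lemma Cm_vieta k w : Cm (vieta k w) = Cm w.
Proof. case: w => [[a b] c]; o3a k; rewrite /Cm /vieta /=; ring. Qed.

Lemma ess_refl B : ess_eq B B.
Proof. by exists 1%g; left => i j; rewrite !perm1. Qed.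

Lemma ess_trans B C D : ess_eq B C -> ess_eq C D -> ess_eq B D.
Proof.
case=> s1 H1 [s2 H2]; exists (s2 * s1)%g.
case: H1 => H1; case: H2 => H2; [left|right|right|left] => i j;
  rewrite H2 H1 !permM ?opprK //.
Qed.

Lemma ess_mu B C k : ess_eq B C -> exists k0, ess_eq (mu k0 B) (mu k C).
Proof.
case=> s H; exists (s k), s.
have E : forall i, (s i == s k) = (i == k) by move=> i; rewrite (inj_eq perm_inj).
case: H => H; [left|right] => i j; rewrite !mxE !E !H;
 case: ifP => _ //; rewrite ?sgzN; nia.
Qed.

Lemma ess_cyclic B C : skew_symmetric B -> cyclic B -> ess_eq B C -> cyclic C.
Proof.
move=> /skewS E [i [j [k [H1 H2 H3]]]] [s [H|H]].
  exists (s^-1 i)%g, (s^-1 j)%g, (s^-1 k)%g; rewrite !H !permKV; done.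
exists (s^-1 i)%g, (s^-1 k)%g, (s^-1 j)%g; rewrite !H !permKV.
rewrite E in H1 H2 H3 *; move: H1 H2 H3; o3a i; o3a j; o3a k; rewrite !mxE /=; split; lia.
Qed.

Lemma ess_Cm B C : skew_symmetric B -> ess_eq B C -> Cm (wtr C) = Cm (wtr B).
Proof.
move=> /skewS E [s H].
have -> : wtr C = (`|B (s o1) (s o2)|, `|B (s o0) (s o2)|, `|B (s o0) (s o1)|).
  by case: H => H; rewrite /wtr !H ?normrN.
have d01 : s o0 != s o1 by rewrite (inj_eq perm_inj).
have d02 : s o0 != s o2 by rewrite (inj_eq perm_inj).
have d12 : s o1 != s o2 by rewrite (inj_eq perm_inj).
move: d01 d02 d12; rewrite E; o3a (s o0); o3a (s o1); o3a (s o2) => //= _ _ _;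
 rewrite /wtr !mxE /= /Cm /= ?normrN; ring.
Qed.

Lemma mu_seq_rcons t k B : mu_seq (rcons t k) B = mu k (mu_seq t B).
Proof. by rewrite /mu_seq foldl_rcons. Qed.

Lemma Bt_S A t : skew_symmetric A -> exists p q r, mu_seq t A = S p q r.
Proof.
move=> /skewS E; elim/last_ind: t => [|t k [p [q [r IH]]]].
  by rewrite /mu_seq /=; rewrite E; eauto.
rewrite mu_seq_rcons IH; o3a k; rewrite ?mu0S ?mu1S ?mu2S; eauto.
Qed.

Lemma skew_Bt A t : skew_symmetric A -> skew_symmetric (mu_seq t A).
Proof. by move=> sk; case: (Bt_S t sk) => [p [q [r ->]]]; exact: skew_S. Qed.

Definition wfold (w : tri) (t : seq 'I_3) := foldl (fun w k => vieta k w) w t.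

Lemma wt_fold A t : skew_symmetric A -> mutation_cyclic A ->
  wtr (mu_seq t A) = wfold (wtr A) t.
Proof.
move=> sk mc; elim/last_ind: t => [|t k IH] //.
rewrite /wfold foldl_rcons -/(wfold _ _) -IH mu_seq_rcons.
have := mc (rcons t k); rewrite mu_seq_rcons.
have := mc t; case: (Bt_S t sk) => [p [q [r ->]]].
by move=> H1 H2; rewrite wtr_mu.
Qed.

Lemma Cm_wfold w t : Cm (wfold w t) = Cm w.
Proof. by elim: t w => [|k t IH] w //=; rewrite IH Cm_vieta. Qed.

Lemma Cm_class A t : skew_symmetric A -> mutation_cyclic A ->
  Cm (wtr (mu_seq t A)) = Cm (wtr A).
Proof. by move=> sk mc; rewrite wt_fold // Cm_wfold. Qed.

Lemma wpos A t i : skew_symmetric A -> mutation_cyclic A ->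
  0 < get (wtr (mu_seq t A)) i.
Proof.
move=> sk mc; have := mc t; case: (Bt_S t sk) => [p [q [r ->]]].
rewrite cycS wtrS /get; o3a i => /=; lia.
Qed.

Definition inC A X := exists t, ess_eq (mu_seq t A) X.

Lemma inC_cyc A X : skew_symmetric A -> mutation_cyclic A -> inC A X -> cyclic X.
Proof. move=> sk mc [t H]; apply: ess_cyclic H; [exact: skew_Bt | exact: mc]. Qed.

Lemma inC_step A X Y : inC A X -> ess_eq (mu k3 X) Y -> inC A Y.
Proof.
move=> [t H] H2; case: (ess_mu k3 H) => k0 H3.
by exists (rcons t k0); rewrite mu_seq_rcons; apply: ess_trans H3 H2.
Qed.

Lemma inC_Cm A X : skew_symmetric A -> mutation_cyclic A -> inC A X ->
  Cm (wtr X) = Cm (wtr A).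
Proof.
move=> sk mc [t H]; rewrite (ess_Cm (skew_Bt t sk) H); exact: Cm_class.
Qed.

Lemma fail_false A X M : skew_symmetric A -> mutation_cyclic A ->
  fail_out X M -> inC A X -> False.
Proof.
move=> sk mc; elim=> [Y HY|Y Z N _ H _ IH] HC.
  by apply: HY; exact: inC_cyc HC.
by apply: IH; exact: inC_step HC H.
Qed.

Lemma Cm_good d e f : 3 <= f -> e <= d -> f <= e -> e <= e * f - d ->
  Cm (wtr (S (- d) (- e) f)) <= 0.
Proof.
move=> H1 H2 H3 H4; rewrite wtrS /Cm /= !normrN.
rewrite (ger0_norm (_ : 0 <= e)); last lia.
rewrite (ger0_norm (_ : 0 <= d)); last lia.
rewrite (ger0_norm (_ : 0 <= f)); last lia.
have h1 : (d - e) * (d - e * f + e) <= 0.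
  apply: mulr_ge0_le0; lia.
have h2 : e * e * (2 - f) + f * f <= 0.
  have : e * e * (2 - f) <= - (e * e) by nia.
  nia.
nia.
Qed.

Lemma f_eq d e f M a b c : M = pass_output d e f ->
  (M = S (- a) (- b) c \/ M = - S (- a) (- b) c) -> 2 <= f -> 2 < c -> f = c.
Proof.
move=> -> H Hf Hc.
move: H => [H|H]; move: (H) => /(congr1 (fun X : mx3 => X o2 o0));
 rewrite /pass_output; case: ifP => _; rewrite ?mu2S !mxE /=; lia.
Qed.

Lemma step2_Cm A Ai M a b c : skew_symmetric A -> mutation_cyclic A ->
  step2_out Ai M -> inC A Ai ->
  (M = S (- a) (- b) c \/ M = - S (- a) (- b) c) -> 2 < c -> Cm (wtr A) <= 0.
Proof.
move=> sk mc; elim=> {Ai M}.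
- move=> Ai d e f He [g1 g2 g3] Hc HC HM Hcc.
  have HC' := inC_step HC He.
  have fc := f_eq (erefl _) HM g3 Hcc.
  case: Hc => [[H1 H2]|[H1 H2]]; last lia.
  rewrite -(inC_Cm sk mc HC'); apply: Cm_good; lia.
- move=> Ai d e f M He _ _ _ _ IH HC HM Hc.
  exact: IH (inC_step HC He) HM Hc.
- move=> Ai d e f M He _ _ _ Hf HC; case: (fail_false sk mc Hf (inC_step HC He)).
- move=> Ai M _ Hf HC; case: (fail_false sk mc Hf HC).
Qed.

Lemma mout_Cm A M a b c : skew_symmetric A -> mutation_cyclic A ->
  m_out A M -> (M = S (- a) (- b) c \/ M = - S (- a) (- b) c) -> 2 < c ->
  Cm (wtr A) <= 0.
Proof.
move=> sk mc [T [[a0 [b0 [c0 [_ [n _ [_ HT _]]]]]] [a' [b' [c' [ET Hc]]]]]] HM Hcc.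
have HC : inC A T by exists [::].
case: Hc => [[[[g1 g2 g3] Hb] HM']|[_ [_ Hf]]|[_ [_ H2]]].
- have fc := f_eq HM' HM g3 Hcc.
  rewrite -(inC_Cm sk mc HC) ET; apply: Cm_good; lia.
- case: (fail_false sk mc Hf HC).
- exact: step2_Cm sk mc H2 HC HM Hcc.
Qed.

Lemma ge3 (x y z : int) : 0 < x -> 0 < y -> 0 < z ->
  x * x + y * y + z * z - x * y * z <= 0 -> 3 <= x.
Proof.
move=> hx hy hz H; rewrite leNgt; apply/negP => h.
have : x = 1 \/ x = 2 by lia.
have hyz : 0 < y * z by apply: mulr_gt0.
have : 0 <= (y - z) * (y - z) by rewrite -expr2 sqr_ge0.
move=> sq; case=> E; subst x; nia.
Qed.

Lemma class_ge3 A M a b c t i : skew_symmetric A -> mutation_cyclic A ->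
  m_out A M -> (M = S (- a) (- b) c \/ M = - S (- a) (- b) c) -> 2 < c ->
  3 <= get (wtr (mu_seq t A)) i.
Proof.
move=> sk mc Hm HM Hc.
have := mout_Cm sk mc Hm HM Hc; rewrite -(Cm_class t sk mc).
have := wpos t o0 sk mc; have := wpos t o1 sk mc; have := wpos t o2 sk mc.
case: (wtr _) => [[x y] z]; rewrite /get /Cm /= => hz hy hx H.
o3a i => /=.
- exact: ge3 H.
- apply: (ge3 hy hx hz); nia.
- apply: (ge3 hz hx hy); nia.
Qed.

Lemma sum3 (F : 'I_3 -> int) : \sum_(i < 3) F i = F o0 + F o1 + F o2.
Proof.
rewrite !big_ord_recr big_ord0 /= add0r; congr (F _ + F _ + F _); exact: val_inj.
Qed.

Lemma seed_rcons A g s k : seed_at A g (rcons s k) = mut_seed k (seed_at A g s).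
Proof. by rewrite /seed_at foldl_rcons. Qed.

Lemma sB_seed A g s : sB (seed_at A g s) = mu_seq s A.
Proof.
elim/last_ind: s => [|s k IH] //; by rewrite seed_rcons mu_seq_rcons /= IH.
Qed.

Lemma get_vieta_ne k j w : j != k -> get (vieta k w) j = get w j.
Proof. case: w => [[x y] z]; o3a k; o3a j => //=. Qed.

Lemma deg_step p q r (gg : 'I_3 -> int) W G k : cyclic (S p q r) ->
  (forall i, gg i * W = get (wtr (S p q r)) i * G) ->
  (- gg k + \sum_(i < 3 | 0 < S p q r i k) S p q r i k * gg i) * W
   = get (vieta k (wtr (S p q r))) k * G.
Proof.
rewrite cycS wtrS => Hc Hg.
rewrite big_mkcond sum3 !mxE; o3a k; rewrite /= ?ltxx;
 repeat case: ifP => ?; rewrite ?add0r ?addr0 !mulrDl ?mulNr -?mulrA ?Hg /get /=; nia.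
Qed.

Lemma ratio_inv A g s i : skew_symmetric A -> mutation_cyclic A -> A *m g = 0 ->
  sg (seed_at A g s) i * get (wtr A) o0 = get (wtr (mu_seq s A)) i * g o0 0.
Proof.
move=> sk mc Hg; elim/last_ind: s i => [|s k IH] i.
  rewrite /seed_at /=.
  have := mc [::]; rewrite /mu_seq /=.
  have E := skewS sk.
  have h : forall j, (A *m g) j 0 = 0 by move=> j; rewrite Hg mxE.
  have h1 := h o0; have h2 := h o1; have h3 := h o2.
  rewrite !mxE !sum3 in h1 h2 h3.
  move: h1 h2 h3; rewrite E !mxE /= cycS wtrS /get; o3a i => /=; nia.
rewrite seed_rcons /=.
have Ew : wtr (mu_seq (rcons s k) A) = vieta k (wtr (mu_seq s A)).
  by rewrite !wt_fold // /wfold foldl_rcons.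
rewrite Ew; case: eqP => [->|/eqP ne].
  rewrite sB_seed; have := mc s; case: (Bt_S s sk) => [p [q [r E]]]; rewrite E => Hc.
  apply: deg_step Hc _ => j; rewrite -E; exact: IH.
by rewrite get_vieta_ne // IH.
Qed.

Definition v1 : 'I_3 -> rat := fun _ => 1.
Definition tf (p : {mpoly rat[3]}) : Frac := FracField.tofrac p.
Definition posF (f : Frac) := exists p q : {mpoly rat[3]},
  [/\ 0 < p.@[v1], 0 < q.@[v1] & f = tf p / tf q].

Lemma tf_neq0 p : 0 < p.@[v1] -> tf p != 0.
Proof.
move=> h; rewrite /tf tofrac_eq0; apply/eqP => E; move: h; by rewrite E meval0 ltxx.
Qed.

Lemma posF_neq0 f : posF f -> f != 0.
Proof. by case=> p [q [h1 h2 ->]]; rewrite mulf_neq0 ?invr_eq0 ?tf_neq0. Qed.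

Lemma posF1 : posF 1.
Proof. exists 1, 1; split; rewrite ?meval1 ?ltr01 //; by rewrite /tf rmorph1 divr1. Qed.

Lemma posFM f1 f2 : posF f1 -> posF f2 -> posF (f1 * f2).
Proof.
case=> p1 [q1 [a1 b1 ->]] [p2 [q2 [a2 b2 ->]]]; exists (p1 * p2), (q1 * q2).
split; rewrite ?mevalM ?mulr_gt0 //.
by rewrite /tf !rmorphM invfM mulrACA.
Qed.

Lemma posFD f1 f2 : posF f1 -> posF f2 -> posF (f1 + f2).
Proof.
case=> p1 [q1 [a1 b1 ->]] [p2 [q2 [a2 b2 ->]]]; exists (p1 * q2 + p2 * q1), (q1 * q2).
split; rewrite ?mevalD ?mevalM ?addr_gt0 ?mulr_gt0 //.
have n1 := tf_neq0 b1; have n2 := tf_neq0 b2.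
have -> : tf (p1 * q2 + p2 * q1) = tf p1 * tf q2 + tf p2 * tf q1.
  by rewrite /tf rmorphD !rmorphM.
have -> : tf (q1 * q2) = tf q1 * tf q2 by rewrite /tf rmorphM.
move: n1 n2; move: (tf p1) (tf p2) (tf q1) (tf q2) => a b c d n1 n2.
by rewrite addf_div // [d * _]mulrC.
Qed.

Lemma posFV f : posF f -> posF f^-1.
Proof.
case=> p [q [a b ->]]; exists q, p; split => //.
by rewrite invfM invrK mulrC.
Qed.

Lemma posFX f n : posF f -> posF (f ^+ n).
Proof. move=> h; elim: n => [|n IH]; rewrite ?expr0 ?exprS; [exact: posF1 | exact: posFM]. Qed.

Lemma posF_prod (P : pred 'I_3) (F : 'I_3 -> Frac) :
  (forall i, posF (F i)) -> posF (\prod_(i < 3 | P i) F i).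
Proof. move=> h; apply: big_ind => //; [exact: posF1 | exact: posFM]. Qed.

Lemma posF_xinit i : posF (xinit i).
Proof.
exists 'X_i, 1; split; rewrite ?meval1 ?mevalXU ?ltr01 //.
by rewrite /tf rmorph1 divr1.
Qed.

Lemma pos_seed A g s i : posF (sx (seed_at A g s) i).
Proof.
elim/last_ind: s i => [|s k IH] i; first exact: posF_xinit.
rewrite seed_rcons /=; case: ifP => _ //.
apply: posFM; last exact: posFV.
by apply: posFD; apply: posF_prod => j; apply: posFX.
Qed.

Lemma mu_mu k B : mu k (mu k B) = B.
Proof.
apply/matrixP => i j; rewrite !mxE.
case: ifP => h; rewrite ?h ?eqxx ?orbT /= ?opprK //.
rewrite sgzN mulrNN; lia.
Qed.

Definition eqv (t1 t2 : gseed) := sx t1 = sx t2 /\ sB t1 = sB t2.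

Lemma eqv_mut k t1 t2 : eqv t1 t2 -> eqv (mut_seed k t1) (mut_seed k t2).
Proof. by case: t1 t2 => [x1 B1 g1] [x2 B2 g2] [/= E1 E2]; subst. Qed.

Lemma eqv_fold v t1 t2 : eqv t1 t2 ->
  eqv (foldl (fun t k => mut_seed k t) t1 v) (foldl (fun t k => mut_seed k t) t2 v).
Proof. by elim: v t1 t2 => [|k v IH] t1 t2 h //=; apply: IH; apply: eqv_mut. Qed.

Lemma eqv_trans t1 t2 t3 : eqv t1 t2 -> eqv t2 t3 -> eqv t1 t3.
Proof. by rewrite /eqv => -[E1 E2] [E3 E4]; rewrite E1 E2 E3 E4. Qed.

Lemma mut_inv k t : skew_symmetric (sB t) -> (forall i, posF (sx t i)) ->
  eqv (mut_seed k (mut_seed k t)) t.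
Proof.
case: t => x B gg /= sk hp; split => /=; last exact: mu_mu.
have Bkk : B k k = 0.
  have := congr1 (fun M : mx3 => M k k) sk; rewrite /= !mxE; move: (B k k) => y; clear; lia.
apply: functional_extensionality => j; case: eqP => [->|] //.
rewrite eqxx.
set P := \prod_(i < 3 | 0 < B i k) x i ^+ `|B i k|.
set Q := \prod_(i < 3 | B i k < 0) x i ^+ `|B i k|.
have EP : \prod_(i < 3 | 0 < mu k B i k)
    (if i == k then (P + Q) / x k else x i) ^+ `|mu k B i k| = Q.
  apply: eq_big => i; first by rewrite mxE eqxx orbT /= oppr_gt0.
  move=> hi; rewrite mxE eqxx orbT /= abszN; rewrite mxE eqxx orbT /= oppr_gt0 in hi.
  case: eqP => [E|//]; by rewrite E Bkk ltxx in hi.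
have EQ : \prod_(i < 3 | mu k B i k < 0)
    (if i == k then (P + Q) / x k else x i) ^+ `|mu k B i k| = P.
  apply: eq_big => i; first by rewrite mxE eqxx orbT /= oppr_lt0.
  move=> hi; rewrite mxE eqxx orbT /= abszN; rewrite mxE eqxx orbT /= oppr_lt0 in hi.
  case: eqP => [E|//]; by rewrite E Bkk ltxx in hi.
rewrite EP EQ.
have hPQ : P + Q != 0.
  apply: posF_neq0; apply: posFD; apply: posF_prod => i; exact: posFX.
have hx : x k != 0 by apply: posF_neq0.
by rewrite addrC invfM invrK mulrA divff // mul1r.
Qed.

Definition rstep (r : seq 'I_3) (k : 'I_3) :=
  if r is k' :: r' then (if k' == k then r' else k :: r) else [:: k].
Definition red (s : seq 'I_3) := foldl rstep [::] s.
Definition nadj (r : seq 'I_3) := sorted (fun a b : 'I_3 => a != b) r.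

Lemma red_ok A g s : skew_symmetric A ->
  eqv (seed_at A g s) (seed_at A g (rev (red s))) /\ nadj (red s).
Proof.
move=> sk; elim/last_ind: s => [|s k [IHe IHs]]; first by [].
rewrite /red foldl_rcons -/(red s) seed_rcons.
case E: (red s) IHe IHs => [|k' r'] IHe IHs /=.
  by split => //; apply: eqv_mut.
case: eqP => [Ek|Nk].
  subst k'; split; last exact: path_sorted IHs.
  rewrite rev_cons seed_rcons in IHe.
  apply: eqv_trans (eqv_mut k IHe) _; apply: mut_inv; last exact: pos_seed.
  rewrite sB_seed; exact: skew_Bt.
split; last by rewrite /nadj /=; apply/andP; split; [rewrite eq_sym; apply/eqP | exact: IHs].
by rewrite rev_cons seed_rcons; apply: eqv_mut.
Qed.

Lemma first_occ r i : nadj r -> i \in r ->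
  exists u v : seq 'I_3, [/\ r = u ++ i :: v, i \notin u & nadj (i :: v)].
Proof.
elim: r => [|x r IH] //= hn; rewrite in_cons; case: eqP => [->|ne] /= h.
  by exists [::], r.
have [u [v [E nu nv]]] := IH (path_sorted hn) h.
exists (x :: u), v; split; rewrite ?E //.
by rewrite in_cons negb_or nu andbT; apply/eqP => E'; apply: ne.
Qed.

Lemma sx_fold_notin v T i : i \notin v ->
  sx (foldl (fun t k => mut_seed k t) T v) i = sx T i.
Proof.
elim: v T => [|k v IH] T //=; rewrite in_cons negb_or => /andP [h1 h2].
by rewrite IH //= ifN.
Qed.

Lemma get_wfold_notin v w i : i \notin v -> get (wfold w v) i = get w i.
Proof.
elim: v w => [|k v IH] w //=; rewrite in_cons negb_or => /andP [h1 h2].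
by rewrite IH // get_vieta_ne.
Qed.

Definition sumt (w : tri) := w.1.1 + w.1.2 + w.2.

Lemma sumt_vieta k w : sumt (vieta k w) = sumt w - get w k + get (vieta k w) k.
Proof. case: w => [[x y] z]; o3a k; rewrite /sumt /get /vieta /=; ring. Qed.

Lemma uplem k k' w : k != k' -> (forall j, 3 <= get w j) ->
  (forall j, 3 <= get (vieta k' w) j) -> get w k' <= get (vieta k' w) k' ->
  get (vieta k' w) k' < get (vieta k (vieta k' w)) k /\
  get (vieta k' w) k < get (vieta k (vieta k' w)) k.
Proof.
case: w => [[x y] z] ne H1 H2.
have a1 := H1 o0; have a2 := H1 o1; have a3 := H1 o2.
have b1 := H2 o0; have b2 := H2 o1; have b3 := H2 o2.
move: ne a1 a2 a3 b1 b2 b3; o3a k; o3a k' => //=;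
 rewrite /get /vieta /= => _ a1 a2 a3 b1 b2 b3 h; split; nia.
Qed.

Lemma wfold_rev_cons w k r : wfold w (rev (k :: r)) = vieta k (wfold w (rev r)).
Proof. by rewrite rev_cons /wfold foldl_rcons. Qed.

Lemma path_bound (w0 : tri) (H3 : forall t j, 3 <= get (wfold w0 t) j) k r :
  nadj (k :: r) ->
  (get (vieta k (wfold w0 (rev r))) k < get (wfold w0 (rev r)) k ->
     sumt (vieta k (wfold w0 (rev r))) + (size r).+1%:Z <= sumt w0) /\
  (~~ (get (vieta k (wfold w0 (rev r))) k < get (wfold w0 (rev r)) k) ->
     (size r).+1%:Z <= sumt w0 + get (vieta k (wfold w0 (rev r))) k + 1).
Proof.
have Hs : forall t, 0 <= sumt (wfold w0 t).
  by move=> t; have := H3 t o0; have := H3 t o1; have := H3 t o2; rewrite /get /sumt /=; lia.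
elim: r k => [|k' r IH] k hn.
  rewrite /= sumt_vieta; have := H3 [:: k] k; rewrite /wfold /= => h.
  split => h'; [lia|]; have := Hs [::]; rewrite /wfold /=; lia.
have nk : k != k' by move: hn; rewrite /nadj /= => /andP [].
have [IH1 IH2] := IH k' (path_sorted hn).
rewrite wfold_rev_cons.
set wa := wfold w0 (rev r).
rewrite -/wa in IH1 IH2.
have Ha : forall j, 3 <= get wa j by move=> j; exact: H3.
have Hb : forall j, 3 <= get (vieta k' wa) j.
  by move=> j; have := H3 (rev (k' :: r)) j; rewrite wfold_rev_cons.
have Hc : 3 <= get (vieta k (vieta k' wa)) k.
  by have := H3 (rev (k :: k' :: r)) k; rewrite !wfold_rev_cons.
have Hsb : 0 <= sumt (vieta k' wa).
  by have := Hs (rev (k' :: r)); rewrite wfold_rev_cons.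
rewrite sumt_vieta /=.
case: (ltP (get (vieta k' wa) k') (get wa k')) => hd.
  have := IH1 hd; rewrite /= => h1.
  split => h'; [|]; lia.
have h2 : ~~ (get (vieta k' wa) k' < get wa k') by rewrite -leNgt.
have h3 := IH2 h2.
have [u1 u2] := uplem nk Ha Hb hd.
rewrite /= in h3; split => h'; lia.
Qed.

Fixpoint wordsN (n : nat) : seq (seq 'I_3) :=
  if n is n'.+1 then [::] :: [seq k :: w | k <- enum 'I_3, w <- wordsN n']
  else [:: [::]].

Lemma wordsN_mem n w : (size w <= n)%N -> w \in wordsN n.
Proof.
elim: n w => [|n IH] [|k w] h.
- by rewrite /= inE.
- by [].
- by rewrite /= inE eqxx.
rewrite /= in_cons; apply/orP; right.
apply: (allpairs_f (fun k w => k :: w)); first by rewrite mem_enum.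
exact: IH.
Qed.

Unset Implicit Arguments.

Theorem mainTheorem1 (A : 'M[int]_3) (g : 'cV[int]_3) (M : 'M[int]_3)
    (a b c : int) :
  skew_symmetric A -> mutation_cyclic A ->
  g != 0 -> A *m g = 0 ->
  m_out A M -> (M = S (- a) (- b) c \/ M = - S (- a) (- b) c) ->
  2 < c ->
  finitely_many_per_degree A g /\ ~ balanced A g.
Proof.
move=> sk mc gn0 Hg Hm HM Hc.
set W := get (wtr A) o0.
set G := g o0 0.
have Wpos : 0 < W by exact: (wpos [::] o0 sk mc).
have Hr : forall s i, sg (seed_at A g s) i * W = get (wtr (mu_seq s A)) i * G.
  by move=> s i; exact: (ratio_inv s i sk mc Hg).
have H3 : forall t j, 3 <= get (wtr (mu_seq t A)) j.
  by move=> t j; exact: (class_ge3 t j sk mc Hm HM Hc).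
have G0 : G != 0.
  apply/eqP => G0; move/negP: gn0; apply; apply/eqP/matrixP => i j.
  rewrite (ord1 j) mxE; have := Hr [::] i; rewrite G0 mulr0 /= => /eqP.
  by rewrite mulf_eq0 (gt_eqF Wpos) orbF => /eqP.
have w0 : clvar_deg A g G (xinit o0) by exists [::], o0.
clearbody W G.
split.
  move=> d _.
  pose N := absz (sumt (wtr A) + `|d| * W + 1).
  exists [seq sx (seed_at A g p.1) p.2 | p <- [seq (w, j) | w <- wordsN N, j <- enum 'I_3]].
  move=> f [s [i [Hf Hd]]].
  have [[Ex EB] Hn] := red_ok g s sk.
  have EB' : mu_seq s A = mu_seq (rev (red s)) A by rewrite -!(sB_seed _ g) EB.
  have Hc0 := Hr s i; rewrite Hd in Hc0.
  have Hci := H3 s i.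
  have Hbd : get (wtr (mu_seq s A)) i <= `|d| * W.
    have : 0 < G \/ G < 0 by lia.
    case=> hG; nia.
  have HS : 0 <= sumt (wtr A).
    have := H3 [::] o0; have := H3 [::] o1; have := H3 [::] o2.
    rewrite /get /sumt /=; lia.
  rewrite -Hf Ex.
  case: (boolP (i \in red s)) => Hin.
    have [u [v [Er nu nv]]] := first_occ Hn Hin.
    have Et : rev (red s) = rev (i :: v) ++ rev u by rewrite Er rev_cat.
    have Ex2 : sx (seed_at A g (rev (red s))) i = sx (seed_at A g (rev (i :: v))) i.
      by rewrite Et /seed_at foldl_cat sx_fold_notin // mem_rev.
    have Ew : get (wtr (mu_seq s A)) i = get (vieta i (wfold (wtr A) (rev v))) i.
      rewrite EB' wt_fold // Et /wfold foldl_cat -/(wfold _ _) get_wfold_notin ?mem_rev //.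
      by rewrite -wfold_rev_cons.
    have H3' : forall t j, 3 <= get (wfold (wtr A) t) j.
      by move=> t j; rewrite -wt_fold //.
    have [B1 B2] := path_bound H3' nv.
    have Hs0 : 0 <= sumt (vieta i (wfold (wtr A) (rev v))).
      by have := H3' (rev (i :: v)); rewrite wfold_rev_cons => h;
         have := h o0; have := h o1; have := h o2; rewrite /get /sumt /=; lia.
    have Hsz : (size (rev (i :: v)) <= N)%N.
      rewrite size_rev /N (_ : size (i :: v) = (size v).+1) //.
      have dW : 0 <= `|d| * W by rewrite mulr_ge0 // ltW.
      case: (ltP (get (vieta i (wfold (wtr A) (rev v))) i) (get (wfold (wtr A) (rev v)) i)) => hd.
        have := B1 hd; lia.
      rewrite -leNgt in B2; have := B2 hd; lia.
    rewrite Ex2; apply/mapP; exists (rev (i :: v), i) => //.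
    apply: (allpairs_f pair); [exact: wordsN_mem | by rewrite mem_enum].
  have Ex2 : sx (seed_at A g (rev (red s))) i = sx (seed_at A g [::]) i.
    by rewrite /seed_at sx_fold_notin // mem_rev.
  rewrite Ex2; apply/mapP; exists ([::], i) => //.
  apply: (allpairs_f pair); [exact: wordsN_mem | by rewrite mem_enum].
move=> Hb; have [h _] := Hb G.
case: (h (exist _ _ w0)) => f' [s [i [_ Hd]]].
have := Hr s i; rewrite Hd.
have := H3 s i.
have : 0 < G \/ G < 0 by lia.
case=> hG; nia.
Qed.
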